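(* Consider the open chain with sites $1,\dots,N$ and distance $|i-j|$. Let $R_{\max}$ be a positive integer and, for each subset $X\subseteq\{1,\dots,N\}$ with $\mathrm{diam}(X)\le R_{\max}$, let $h_X$ be an operator supported in $X$ (possibly zero, not necessarily Hermitian) such that $h_X|W\rangle=0$ and $h_X|\overline 0\rangle=0$. If for some $p\in\{0,\dots,N\}$ with $p\le N/R_{\max}$ one has $\left(\sum_{X:\mathrm{diam}(X)\le R_{\max}}h_X\right)|W^p\rangle=E'_p|W^p\rangle$ for some $E'_p\in\mathbb{C}$, then $E'_p=0$.
   Context: System of $N$ qubits on sites $1,\dots,N$ with local basis $|0\rangle,|1\rangle$; $s_i^\dagger$ acts on site $i$ as $s^\dagger|0\rangle=|1\rangle$, $s^\dagger|1\rangle=0$; $|\overline 0\rangle=|0\rangle^{\otimes N}$. For a set $X$ of sites, $\mathrm{diam}(X)=1+\max_{i,j\in X}|i-j|$. An operator is supported in $X$ if it acts as the identity on all sites outside $X$. $S^\dagger=\sum_i s_i^\dagger$; for $p=0,\dots,N$, $|W^p\rangle$ is the normalized equal-weight superposition of all basis states with exactly $p$ sites in state $|1\rangle$ (equivalently the normalization of $(S^\dagger)^p|\overline 0\rangle$), and $|W\rangle=|W^1\rangle$. *)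

(* Defs.v *)
From HB Require Import structures.
From mathcomp Require Import all_boot all_order all_algebra.
From mathcomp Require Import complex.
From mathcomp Require Import reals.
Set Implicit Arguments. Unset Strict Implicit. Unset Printing Implicit Defensive.
Import Order.TTheory GRing.Theory Num.Theory.
Local Open Scope ring_scope.
Local Open Scope complex_scope.

(* Computational basis states of N qubits: b : 'I_N -> bool, b i = true <-> site i in |1>. *)
Definition bstate (N : nat) := {ffun 'I_N -> bool}.

(* Vectors are coefficient functions on the basis, operators are matrices
   indexed by basis states (M b b' = <b|M|b'>). *)
Definition vec (R : realType) (N : nat) := bstate N -> R[i].
Definition op (R : realType) (N : nat) := bstate N -> bstate N -> R[i].

Definition apply (R : realType) (N : nat) (M : op R N) (v : vec R N) : vec R N :=
  fun b => \sum_(b' : bstate N) M b b' * v b'.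

(* diam X = 1 + max_{i,j in X} |i - j| (sites 'I_N are 0-based; translation invariant);
   convention diam set0 = 0. *)
Definition diam (N : nat) (X : {set 'I_N}) : nat :=
  if X == set0 then 0%N
  else (1 + \max_(i in X) \max_(j in X) (i - j))%N.

Definition agree_out (N : nat) (X : {set 'I_N}) (b b' : bstate N) : bool :=
  [forall i, (i \notin X) ==> (b i == b' i)].

Definition restr (N : nat) (X : {set 'I_N}) (b : bstate N) : bstate N :=
  [ffun i => (i \in X) && b i].

(* M is supported in X, i.e. M = A_X (x) Id_{outside X}:
   <b|M|b'> = [b, b' agree outside X] * <b_X|A|b'_X>. *)
Definition supported (R : realType) (N : nat) (X : {set 'I_N}) (M : op R N) : Prop :=
  forall b b', M b b' = if agree_out X b b' then M (restr X b) (restr X b') else 0.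

Definition weight (N : nat) (b : bstate N) : nat := #|[set i | b i]|.

Definition Wp (R : realType) (N p : nat) : vec R N :=
  fun b => if weight b == p then ((Num.sqrt ('C(N, p)%:R : R))^-1)%:C else 0.

Arguments Wp R N p : clear implicits.

Definition Wst (R : realType) (N : nat) : vec R N := Wp R N 1.

Arguments Wst R N : clear implicits.

Definition zbar (R : realType) (N : nat) : vec R N :=
  fun b => if [forall i, ~~ b i] then 1 else 0.
Arguments zbar R N : clear implicits.

(* Main.v *)
Require Import Defs.
From HB Require Import structures.
From mathcomp Require Import all_boot all_order all_algebra.
From mathcomp Require Import complex.
From mathcomp Require Import reals.
From Stdlib Require Import FunctionalExtensionality.
Import Order.TTheory GRing.Theory Num.Theory.
Local Open Scope ring_scope.

Definition cW (R : realType) (N k : nat) : R[i] :=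
  (((Num.sqrt ('C(N, k)%:R : R))^-1)%:C)%C.

Lemma WpE (R : realType) N k (s : bstate N) :
  Wp R N k s = if weight s == k then cW R N k else 0.
Proof. by []. Qed.

Lemma cW_neq0 (R : realType) N k : (k <= N)%N -> cW R N k != 0.
Proof.
move=> kN; apply/eqP => /(@complexI R).
apply/eqP; rewrite invr_eq0 sqrtr_eq0 -ltNge ltr0n bin_gt0 //.
Qed.

Lemma zbarE (R : realType) N : zbar R N = Wp R N 0.
Proof.
apply: functional_extensionality => s; rewrite /zbar WpE /cW bin0 sqrtr1 invr1.
have -> : [forall i, ~~ s i] = (weight s == 0%N).
  rewrite /weight cards_eq0; apply/forallP/eqP => [H|H i].
    by apply/setP => i; rewrite !inE (negbTE (H i)).
  apply/negP => si; have : i \in [set i | s i] by rewrite inE.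
  by rewrite H inE.

by case: ifP.
Qed.

Lemma key (R : realType) N (X : {set 'I_N}) (hX : op R N) (b : bstate N) :
  supported X hX ->
  apply hX (Wp R N #|[set i | b i] :&: X|) = (fun _ => 0) ->
  \sum_(b' : bstate N) hX b b' * Wp R N (weight b) b' = 0.
Proof.
move=> sup hk.
set k := #|[set i | b i] :&: X|.
set rb := restr X b.
pose psi (s : bstate N) : bstate N := [ffun i => if i \in X then s i else s i (+) b i].
have psiK : cancel psi psi.
  by move=> s; apply/ffunP => i; rewrite !ffunE; case: (i \in X) => //=; rewrite addbK.
rewrite (reindex_inj (can_inj psiK)) /=.
pose G s := if weight s == k then hX rb s else 0.
have agE : forall s, agree_out X b (psi s) = agree_out X rb s.
  move=> s; apply/forallP/forallP => H i; have := H i; rewrite /rb /restr !ffunE;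
  by case: (i \in X) => //=; case: (b i); case: (s i).
have rsE : forall s, restr X (psi s) = restr X s.
  by move=> s; apply/ffunP => i; rewrite !ffunE; case: (i \in X).
have rrE : restr X rb = rb.
  by apply/ffunP => i; rewrite !ffunE; case: (i \in X).
have E1 : forall s, hX b (psi s) * Wp R N (weight b) (psi s) = cW R N (weight b) * G s.
  move=> s; have hsE : hX b (psi s) = hX rb s.
    by rewrite sup [in RHS]sup agE rsE rrE.
  rewrite hsE /G.
  case ag: (agree_out X rb s); last first.
    by rewrite sup ag !mul0r; case: ifP; rewrite ?mulr0.
  have z : forall i, i \notin X -> ~~ s i.
    move=> i iX; move/forallP: ag => /(_ i); rewrite iX /= /rb /restr ffunE (negbTE iX).
    by move/eqP => <-.
  have wE : weight (psi s) = (weight s + #|[set i | b i] :\: X|)%N.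
    rewrite /weight -(cardsID X [set i | psi s i]); congr (_ + _)%N; apply: eq_card => i;
    rewrite !inE ffunE; case iX: (i \in X); rewrite ?andbT ?andbF //=.
    1,2: by move: (z i (negbT iX)); case: (s i).
  have wb : weight b = (k + #|[set i | b i] :\: X|)%N by rewrite /weight cardsID.
  rewrite WpE wE wb eqn_add2r; case: ifP => _; by rewrite ?mulr0 // mulrC.
under eq_bigr do rewrite E1.
rewrite -mulr_sumr.
have kN : (k <= N)%N by rewrite -[N]card_ord max_card.
have : \sum_s hX rb s * Wp R N k s = 0 by have := congr1 (fun f => f rb) hk.
have hG : forall s, hX rb s * Wp R N k s = cW R N k * G s.
  by move=> s; rewrite WpE /G; case: ifP; rewrite ?mulr0 // mulrC.
rewrite (eq_bigr _ (fun s _ => hG s)) -mulr_sumr => /eqP; rewrite mulf_eq0 (negbTE (@cW_neq0 R N k kN)) /= => /eqP ->.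
by rewrite mulr0.
Qed.

Theorem proposition2 (R : realType) (N Rmax : nat) (h : {set 'I_N} -> op R N)
  (p : nat) (E : R[i]) :
  (0 < Rmax)%N ->
  (forall X : {set 'I_N}, (diam X <= Rmax)%N ->
     [/\ supported X (h X),
         apply (h X) (Wst R N) = (fun _ => 0) &
         apply (h X) (zbar R N) = (fun _ => 0)]) ->
  (p <= N)%N -> (p * Rmax <= N)%N ->
  apply (fun b b' => \sum_(X : {set 'I_N} | (diam X <= Rmax)%N) h X b b') (Wp R N p)
    = (fun b => E * Wp R N p b) ->
  E = 0.
Proof.
move=> R0 hyp pN pR eig.
have fP : forall j : 'I_p, (j * Rmax < N)%N.
  by move=> j; apply: leq_trans pR; rewrite ltn_pmul2r.
pose f (j : 'I_p) : 'I_N := Ordinal (fP j).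
have finj : injective f.
  move=> j1 j2 /(congr1 val) /= /eqP; rewrite eqn_pmul2r // => /eqP H.
  exact: val_inj.
pose S := f @: [set: 'I_p].
pose b : bstate N := [ffun i => i \in S].
have bS : [set i | b i] = S by apply/setP => i; rewrite inE ffunE.
have wb : weight b = p by rewrite /weight bS card_imset // cardsT card_ord.
have zero : forall X, (diam X <= Rmax)%N ->
    \sum_(b' : bstate N) h X b b' * Wp R N p b' = 0.
  move=> X dX; case: (hyp X dX) => sup hW hz.
  have far : forall a c : 'I_N, a \in X -> c \in X -> (a + Rmax <= c)%N -> False.
    move=> a c aX cX le; move: dX; rewrite /diam.
    have -> : (X == set0) = false by apply/negbTE/set0Pn; exists a.
    apply/negP; rewrite -ltnNge add1n ltnS.
    apply: (leq_trans _ (leq_bigmax_cond _ cX)).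
    apply: (leq_trans _ (leq_bigmax_cond _ aX)).
    by rewrite leq_subRL // (leq_trans _ le) // leq_addr.
  have le1 : (#|[set i | b i] :&: X| <= 1)%N.
    rewrite bS; apply/card_le1_eqP => x y; rewrite !inE.
    move=> /andP[/imsetP[j1 _ ->] X1] /andP[/imsetP[j2 _ ->] X2].
    suff -> : j1 = j2 by [].
    apply: val_inj; apply/eqP; rewrite eqn_leq; apply/andP; split; rewrite leqNgt; apply/negP => lt.
      by apply: (far _ _ X2 X1); rewrite /= -mulSnr leq_mul2r lt orbT.
    by apply: (far _ _ X1 X2); rewrite /= -mulSnr leq_mul2r lt orbT.
  rewrite -wb; apply: key sup _.
  move: le1; case: #|_ :&: _| => [_|[_|//]].
    by rewrite -zbarE.
  exact: hW.
have := congr1 (fun g => g b) eig; rewrite /apply /=.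
under eq_bigr do rewrite mulr_suml.
rewrite exchange_big big1 => [|X dX]; last exact: zero.
move/esym/eqP; rewrite WpE wb eqxx mulf_eq0 (negbTE (@cW_neq0 R N p pN)) orbF.
by move/eqP.
Qed.
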